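(* Consider the system of ordinary differential equations for $(x(t),h(t),n(t))$: \[ \frac{dx}{dt} = x(1-x)S(h) + \mu(h)(1-x) - \nu x,\qquad \frac{dh}{dt} = \alpha n(1+\beta x)\,G(h) - \Gamma(n)(h-1),\qquad \frac{dn}{dt} = r n(1-n) - D(h,x)\,n, \] where \[ S(h) = \frac{s_0}{1+e^{-\lambda(h-h_c)}} - c + \varphi\, d_S(h),\quad d_S(h) = \frac{d_{\max} h^m}{h_{50}^m + h^m},\quad \mu(h)=\mu_0 h^p, \] \[ G(h) = \frac{K_g}{K_g+h},\quad \Gamma(n) = \frac{\gamma_0}{1+\eta n},\quad D(h,x) = (1-\varphi x)\,d_S(h), \] with parameters $s_0,\lambda,h_c,c,d_{\max},h_{50},m,\mu_0,p,\alpha,\beta,K_g,\gamma_0,\eta,r$ positive, $0<\varphi\le 1$, and $\nu=0$. Assume $\mathcal{R}_0^* = \dfrac{r}{d_{\max}} > 1$. Then the system has a unique equilibrium of the form $E_1=(1,h^*,n^* )$ with $h^*>0$ and $n^*>0$, and $E_1\in[0,1]\times(0,\infty)\times[0,1]$.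
   Context: The model describes a tumor: $x$ is the fraction of acid-resistant cells, $h$ is the normalized proton concentration ($h=1$ physiological), $n$ is normalized tumor density. An equilibrium with $x^*=1$ is one with no acid-sensitive cells. *)

(* Defs.v *)
From Stdlib Require Import Reals.
Open Scope R_scope.

Record params := Params {
  s0 : R; lam : R; hc : R; c : R; dmax : R; h50 : R; m : R; mu0 : R; p : R;
  alpha : R; beta : R; Kg : R; gamma0 : R; eta : R; r : R; phi : R; nu : R }.

Definition dS (P : params) (h : R) : R :=
  dmax P * Rpower h (m P) / (Rpower (h50 P) (m P) + Rpower h (m P)).

Definition Sfun (P : params) (h : R) : R :=
  s0 P / (1 + exp (- lam P * (h - hc P))) - c P + phi P * dS P h.

Definition mufun (P : params) (h : R) : R := mu0 P * Rpower h (p P).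

Definition Gfun (P : params) (h : R) : R := Kg P / (Kg P + h).

Definition Gammafun (P : params) (n : R) : R := gamma0 P / (1 + eta P * n).

Definition Dfun (P : params) (h x : R) : R := (1 - phi P * x) * dS P h.

Definition fx (P : params) (x h n : R) : R :=
  x * (1 - x) * Sfun P h + mufun P h * (1 - x) - nu P * x.
Definition fh (P : params) (x h n : R) : R :=
  alpha P * n * (1 + beta P * x) * Gfun P h - Gammafun P n * (h - 1).
Definition fn (P : params) (x h n : R) : R :=
  r P * n * (1 - n) - Dfun P h x * n.

Definition is_equilibrium (P : params) (x h n : R) : Prop :=
  fx P x h n = 0 /\ fh P x h n = 0 /\ fn P x h n = 0.

Definition admissible (P : params) : Prop :=
  0 < s0 P /\ 0 < lam P /\ 0 < hc P /\ 0 < c P /\ 0 < dmax P /\ 0 < h50 P /\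
  0 < m P /\ 0 < mu0 P /\ 0 < p P /\ 0 < alpha P /\ 0 < beta P /\ 0 < Kg P /\
  0 < gamma0 P /\ 0 < eta P /\ 0 < r P /\ 0 < phi P /\ phi P <= 1 /\ nu P = 0.

(* Main.v *)
Require Import Defs.
From Stdlib Require Import Reals Lra Psatz.
Open Scope R_scope.

Lemma Rpow_pos (x y : R) : 0 < Rpower x y.
Proof. unfold Rpower; apply exp_pos. Qed.

Lemma cst_c (k a : R) : continuity_pt (fun _ => k) a.
Proof. apply continuity_pt_const; intros u v; reflexivity. Qed.

Lemma rp_c (y a : R) : 0 < a -> continuity_pt (fun x => Rpower x y) a.
Proof.
  intro Ha. apply derivable_continuous_pt.
  exists (y * Rpower a (y - 1)). apply derivable_pt_lim_power; exact Ha.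
Qed.

Lemma dS_c (P : params) a : 0 < a -> continuity_pt (dS P) a.
Proof.
  intro Ha. unfold dS.
  apply (continuity_pt_div (fun h => dmax P * Rpower h (m P))
           (fun h => Rpower (h50 P) (m P) + Rpower h (m P))).
  - apply (continuity_pt_mult (fun _ => dmax P) (fun h => Rpower h (m P))).
    apply cst_c. apply rp_c; auto.
  - apply (continuity_pt_plus (fun _ => Rpower (h50 P) (m P)) (fun h => Rpower h (m P))).
    apply cst_c. apply rp_c; auto.
  - pose proof (Rpow_pos (h50 P) (m P)); pose proof (Rpow_pos a (m P)). lra.
Qed.

Lemma dS_bnd (P : params) h : 0 < dmax P -> 0 < dS P h < dmax P.
Proof.
  intro Hd. unfold dS.
  pose proof (Rpow_pos (h50 P) (m P)); pose proof (Rpow_pos h (m P)).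
  set (A := Rpower (h50 P) (m P)) in *. set (T := Rpower h (m P)) in *.
  split.
  - apply Rdiv_lt_0_compat; nra.
  - apply Rmult_lt_reg_r with (A + T); [lra|].
    unfold Rdiv; rewrite Rmult_assoc, Rinv_l; nra.
Qed.

Lemma dS_mono (P : params) h1 h2 : 0 < m P -> 0 < dmax P -> 0 < h1 <= h2 -> dS P h1 <= dS P h2.
Proof.
  intros Hm Hd Hh. unfold dS.
  pose proof (Rpow_pos (h50 P) (m P)); pose proof (Rpow_pos h1 (m P));
  pose proof (Rpow_pos h2 (m P)).
  assert (Hle : Rpower h1 (m P) <= Rpower h2 (m P)) by (apply Rle_Rpower_l; lra).
  set (A := Rpower (h50 P) (m P)) in *. set (T1 := Rpower h1 (m P)) in *.
  set (T2 := Rpower h2 (m P)) in *.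
  unfold Rdiv. apply Rmult_le_reg_r with ((A+T1)*(A+T2)); [nra|].
  replace (dmax P * T1 * / (A + T1) * ((A + T1) * (A + T2))) with (dmax P * T1 * (A+T2))
    by (field; lra).
  replace (dmax P * T2 * / (A + T2) * ((A + T1) * (A + T2))) with (dmax P * T2 * (A+T1))
    by (field; lra).
  assert (0 <= dmax P * A * (T2 - T1)) by (apply Rmult_le_pos; [nra|lra]).
  nra.
Qed.

Definition Nf (P : params) h := 1 - (1 - phi P) * dS P h / r P.

Definition Ff (P : params) h :=
  alpha P * (1 + beta P) * Nf P h * (1 + eta P * Nf P h) * Kg P
  - gamma0 P * (Kg P + h) * (h - 1).

Theorem theorem3 (P : params) :
  admissible P ->
  r P / dmax P > 1 ->
  exists hs ns : R,
    0 < hs /\ 0 < ns /\ is_equilibrium P 1 hs ns /\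
    (forall h n : R, 0 < h -> 0 < n -> is_equilibrium P 1 h n -> h = hs /\ n = ns) /\
    (0 <= 1 <= 1 /\ 0 < hs /\ 0 <= ns <= 1).
Proof.
  intros (Hs0 & Hlam & Hhc & Hc & Hd & H50 & Hm & Hmu & Hp & Hal & Hbe & HKg & Hg0 & Het & Hr & Hph & Hph1 & Hnu) Hrd.
  assert (Hrd' : dmax P < r P).
  { apply Rmult_lt_reg_r with (/ dmax P). apply Rinv_0_lt_compat; lra.
    rewrite Rinv_r by lra. exact Hrd. }
  assert (HN : forall h, 0 < Nf P h <= 1).
  { intro h. pose proof (dS_bnd P h Hd). unfold Nf.
    assert (0 <= (1 - phi P) * dS P h / r P < 1).
    { split. unfold Rdiv; apply Rmult_le_pos; [nra|left; apply Rinv_0_lt_compat; lra].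
      apply Rmult_lt_reg_r with (r P); [lra|].
      unfold Rdiv; rewrite Rmult_assoc, Rinv_l by lra. nra. }
    lra. }
  assert (HNm : forall h1 h2, 0 < h1 <= h2 -> Nf P h2 <= Nf P h1).
  { intros h1 h2 H. pose proof (dS_mono P h1 h2 Hm Hd H). unfold Nf, Rdiv.
    pose proof (Rinv_0_lt_compat _ Hr).
    assert (0 <= (1 - phi P) * / r P * (dS P h2 - dS P h1)) by
      (apply Rmult_le_pos; [apply Rmult_le_pos; lra|lra]).
    nra. }
  assert (Hchar : forall h n, 0 < h -> 0 < n -> is_equilibrium P 1 h n ->
                   n = Nf P h /\ Ff P h = 0).
  { intros h n Hh Hn (E1 & E2 & E3).
    unfold fn, Dfun in E3. unfold fh, Gfun, Gammafun in E2.
    assert (Hn' : n = Nf P h).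
    { unfold Nf. apply Rmult_eq_reg_l with (r P * n); [|nra].
      field_simplify; [|lra]. field_simplify in E3. nra. }
    split; [exact Hn'|].
    unfold Ff; rewrite <- Hn'.
    assert (0 < 1 + eta P * n) by nra.
    apply Rmult_eq_reg_r with (/ ((Kg P + h) * (1 + eta P * n))).
    2: { apply Rinv_neq_0_compat. nra. }
    rewrite Rmult_0_l. rewrite <- E2. field. split; lra. }
  assert (Hsol : forall h, 0 < h -> Ff P h = 0 -> is_equilibrium P 1 h (Nf P h)).
  { intros h Hh HF. pose proof (HN h) as [HN1 HN2]. unfold is_equilibrium, fx, fh, fn, Dfun, Gfun, Gammafun.
    rewrite Hnu. split; [ring|]. split.
    - unfold Ff in HF.
      assert (0 < 1 + eta P * Nf P h) by nra.
      apply Rmult_eq_reg_r with ((Kg P + h) * (1 + eta P * Nf P h)); [|nra].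
      rewrite Rmult_0_l. rewrite <- HF. field. split; lra.
    - unfold Nf. field. lra. }
  assert (Hgt1 : forall h, 0 < h -> Ff P h = 0 -> 1 < h).
  { intros h Hh HF. unfold Ff in HF. pose proof (HN h). 
    assert (0 < alpha P * (1 + beta P) * Nf P h * (1 + eta P * Nf P h) * Kg P).
    { apply Rmult_lt_0_compat; [|lra]. apply Rmult_lt_0_compat; [|nra].
      apply Rmult_lt_0_compat; nra. }
    destruct (Rle_lt_dec h 1) as [Hl|Hl]; [|exact Hl].
    assert (0 <= gamma0 P * (Kg P + h) * (1 - h)) by (apply Rmult_le_pos; [apply Rmult_le_pos|]; lra).
    nra. }
  set (C := alpha P * (1 + beta P) * (1 + eta P) * Kg P).
  assert (HC : 0 < C) by (unfold C; repeat apply Rmult_lt_0_compat; lra).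
  set (M := 2 + C / (gamma0 P * Kg P)).
  assert (HCM : 0 < C / (gamma0 P * Kg P)) by (apply Rdiv_lt_0_compat; nra).
  assert (Hex : {z | 1 <= z <= M /\ (fun h => - Ff P h) z = 0}).
  { apply Ranalysis5.IVT_interv.
    - intros a Ha. unfold Ff, Nf.
      assert (Hc1 : continuity_pt (fun h => 1 - (1 - phi P) * dS P h / r P) a).
      { apply (continuity_pt_minus (fun _ => 1) (fun h => (1 - phi P) * dS P h / r P)).
        apply cst_c.
        apply (continuity_pt_div (fun h => (1 - phi P) * dS P h) (fun _ => r P)); [|apply cst_c|lra].
        apply (continuity_pt_mult (fun _ => 1 - phi P) (dS P)). apply cst_c. apply dS_c; lra. }
      set (g := fun h => 1 - (1 - phi P) * dS P h / r P) in *.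
      apply (continuity_pt_opp (fun h => alpha P * (1 + beta P) * g h * (1 + eta P * g h) * Kg P
           - gamma0 P * (Kg P + h) * (h - 1))).
      apply (continuity_pt_minus (fun h => alpha P * (1 + beta P) * g h * (1 + eta P * g h) * Kg P)
           (fun h => gamma0 P * (Kg P + h) * (h - 1))).
      + apply (continuity_pt_mult (fun h => alpha P * (1 + beta P) * g h * (1 + eta P * g h)) (fun _ => Kg P)); [|apply cst_c].
        apply (continuity_pt_mult (fun h => alpha P * (1 + beta P) * g h) (fun h => (1 + eta P * g h))).
        * apply (continuity_pt_mult (fun _ => alpha P * (1 + beta P)) g); [apply cst_c|exact Hc1].
        * apply (continuity_pt_plus (fun _ => 1) (fun h => eta P * g h)); [apply cst_c|].
          apply (continuity_pt_mult (fun _ => eta P) g); [apply cst_c|exact Hc1].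
      + assert (Hid : continuity_pt (fun h => h) a).
        { apply derivable_continuous_pt. exists 1. apply derivable_pt_lim_id. }
        apply (continuity_pt_mult (fun h => gamma0 P * (Kg P + h)) (fun h => h - 1)).
        * apply (continuity_pt_mult (fun _ => gamma0 P) (fun h => Kg P + h)); [apply cst_c|].
          apply (continuity_pt_plus (fun _ => Kg P) (fun h => h)); [apply cst_c|exact Hid].
        * apply (continuity_pt_minus (fun h => h) (fun _ => 1)); [exact Hid|apply cst_c].
    - unfold M; lra.
    - cbv beta. unfold Ff. pose proof (HN 1).
      assert (0 < alpha P * (1 + beta P) * Nf P 1 * (1 + eta P * Nf P 1) * Kg P).
      { apply Rmult_lt_0_compat; [|lra]. apply Rmult_lt_0_compat; [|nra].
        apply Rmult_lt_0_compat; nra. }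
      nra.
    - cbv beta. unfold Ff. pose proof (HN M) as [Ha Hb].
      assert (H1 : alpha P * (1 + beta P) * Nf P M * (1 + eta P * Nf P M) * Kg P <= C).
      { unfold C. apply Rmult_le_compat_r; [lra|].
        assert (Nf P M * (1 + eta P * Nf P M) <= 1 + eta P).
        { assert (Nf P M * Nf P M <= 1) by (replace 1 with (1*1) by ring; apply Rmult_le_compat; lra).
          assert (eta P * (Nf P M * Nf P M) <= eta P * 1) by (apply Rmult_le_compat_l; lra).
          nra. }
        rewrite !Rmult_assoc. apply Rmult_le_compat_l; [lra|].
        apply Rmult_le_compat_l; [lra|]. lra. }
      assert (H2 : gamma0 P * Kg P * (M - 1) = gamma0 P * Kg P + C).
      { unfold M. field. split; lra. }
      assert (0 < M - 1) by (unfold M; lra).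
      nra. }
  destruct Hex as [hs [[Hh1 Hh2] HF]]. cbv beta in HF.
  assert (HF' : Ff P hs = 0) by lra.
  exists hs, (Nf P hs). pose proof (HN hs).
  split; [lra|]. split; [lra|]. split; [apply Hsol; lra|].
  split; [|split; [lra|split; lra]].
  intros h n Hh Hn He.
  destruct (Hchar h n Hh Hn He) as [-> HFh].
  assert (Hh1' : 1 < h) by (apply Hgt1; auto).
  assert (Hs1' : 1 < hs) by (apply Hgt1; lra).
  assert (Heq : h = hs).
  { destruct (Rtotal_order h hs) as [Hl|[Hl|Hl]]; [exfalso| exact Hl | exfalso].
    - pose proof (HNm h hs ltac:(lra)). pose proof (HN h). pose proof (HN hs). unfold Ff in HFh, HF'.
      assert (Nf P hs * (1 + eta P * Nf P hs) <= Nf P h * (1 + eta P * Nf P h)).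
      { assert (0 <= (Nf P h - Nf P hs) * (1 + eta P * (Nf P h + Nf P hs)))
          by (apply Rmult_le_pos; nra). nra. }
      assert (gamma0 P * (Kg P + h) * (h - 1) < gamma0 P * (Kg P + hs) * (hs - 1)).
      { assert (0 < gamma0 P * ((hs - h) * (hs + h + Kg P - 1))) by
          (apply Rmult_lt_0_compat; [lra|apply Rmult_lt_0_compat; lra]). nra. }
      assert (alpha P * (1 + beta P) * Nf P hs * (1 + eta P * Nf P hs) * Kg P <=
              alpha P * (1 + beta P) * Nf P h * (1 + eta P * Nf P h) * Kg P).
      { apply Rmult_le_compat_r; [lra|]. rewrite !Rmult_assoc. apply Rmult_le_compat_l; [lra|].
        apply Rmult_le_compat_l; [lra|]. lra. }
      lra.
    - pose proof (HNm hs h ltac:(lra)). pose proof (HN h). pose proof (HN hs). unfold Ff in HFh, HF'.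
      assert (Nf P h * (1 + eta P * Nf P h) <= Nf P hs * (1 + eta P * Nf P hs)).
      { assert (0 <= (Nf P hs - Nf P h) * (1 + eta P * (Nf P hs + Nf P h)))
          by (apply Rmult_le_pos; nra). nra. }
      assert (gamma0 P * (Kg P + hs) * (hs - 1) < gamma0 P * (Kg P + h) * (h - 1)).
      { assert (0 < gamma0 P * ((h - hs) * (h + hs + Kg P - 1))) by
          (apply Rmult_lt_0_compat; [lra|apply Rmult_lt_0_compat; lra]). nra. }
      assert (alpha P * (1 + beta P) * Nf P h * (1 + eta P * Nf P h) * Kg P <=
              alpha P * (1 + beta P) * Nf P hs * (1 + eta P * Nf P hs) * Kg P).
      { apply Rmult_le_compat_r; [lra|]. rewrite !Rmult_assoc. apply Rmult_le_compat_l; [lra|].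
        apply Rmult_le_compat_l; [lra|]. lra. }
      lra. }
  subst h. split; reflexivity.
Qed.
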